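(* Let $\mathfrak g$ be an almost abelian Lie algebra with a Hermitian structure $(J,g)$ and let $e$ be an admissible frame with data $\lambda,v,A$. Then the Chern connection of $g$ is flat if and only if $\lambda=0$, $v=0$ and $[A,A^\ast]=0$.
   Context: Setup: Hermitian structure $(J,g)$ on a real Lie algebra $\mathfrak g$ of dimension $2n$ ($J$ integrable, $g$ a $J$-invariant inner product), viewed as a left-invariant Hermitian structure on the corresponding simply connected Lie group. $\mathfrak g^{1,0}=\{x-\sqrt{-1}Jx\}$; a unitary frame is a basis $e_1,\dots,e_n$ of $\mathfrak g^{1,0}$ with $g(e_i,\bar e_j)=\delta_{ij}$, dual coframe $\varphi_i$, $d$ the Chevalley–Eilenberg differential. $\mathfrak g$ is almost abelian if non-abelian with an abelian ideal of codimension one; an admissible frame is a unitary frame with $d\varphi_1=-\lambda\,\varphi_1\wedge\bar\varphi_1$, $d\varphi_i=-\bar v_i\,\varphi_1\wedge\bar\varphi_1+\sum_{j=2}^n\overline{A_{ij}}(\varphi_1+\bar\varphi_1)\wedge\varphi_j$ ($2\le i\le n$), $\lambda\in\mathbb R$, $v\in\mathbb C^{n-1}$, $A\in M_{n-1}(\mathbb C)$. The Chern connection is the unique connection preserving $J$ and $g$ whose torsion has vanishing $(1,1)$-part. *)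

(* Defs.v *)
From HB Require Import structures.
From mathcomp Require Import all_boot all_order all_algebra.
From mathcomp Require Import complex.
Set Implicit Arguments. Unset Strict Implicit. Unset Printing Implicit Defensive.
Import Order.TTheory GRing.Theory Num.Theory.
Local Open Scope ring_scope.

Section Hermitian.
Variables (R : rcfType) (m : nat).
Local Notation V := 'rV[R]_m.
Local Notation C := R[i].

Definition bilinear_map (f : V -> V -> V) :=
  (forall (a : R) x y z, f (a *: x + y) z = a *: f x z + f y z) /\
  (forall (a : R) x y z, f z (a *: x + y) = a *: f z x + f z y).

Definition is_lie_bracket (br : V -> V -> V) :=
  bilinear_map br /\ (forall x, br x x = 0) /\
  (forall x y z, br x (br y z) + br y (br z x) + br z (br x y) = 0).

Definition ip (G : 'M[R]_m) (x y : V) : R := (x *m G *m y^T) 0 0.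

(* (J,g) Hermitian structure: J complex structure (J^2=-1), integrable
   (Nijenhuis tensor vanishes), g inner product with g(Jx,Jy)=g(x,y).
   J acts on x by x *m J. *)
Definition hermitian_structure (br : V -> V -> V) (J G : 'M[R]_m) :=
  [/\ J *m J = - 1%:M,
      (forall x y, br (x *m J) (y *m J) - br x y - br (x *m J) y *m J
                   - br x (y *m J) *m J = 0),
      G^T = G,
      (forall x, x != 0 -> 0 < ip G x x) &
      (forall x y, ip G (x *m J) (y *m J) = ip G x y)].

(* almost abelian: non-abelian, with an abelian ideal of codimension one
   (the ideal is the row space of h) *)
Definition almost_abelian (br : V -> V -> V) :=
  (exists x y, br x y != 0) /\
  exists h : 'M[R]_m,
    [/\ \rank h = m.-1,
        (forall x y, (y <= h)%MS -> (br x y <= h)%MS) &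
        (forall x y, (x <= h)%MS -> (y <= h)%MS -> br x y = 0)].

(* left-invariant connections = bilinear maps nab, nab x y = nabla_x y *)
Definition torsion (br nab : V -> V -> V) (x y : V) : V :=
  nab x y - nab y x - br x y.

(* Chern connection: nabla J = 0, nabla g = 0, (1,1)-part of torsion
   vanishes, i.e. T(Jx,Jy) = -T(x,y). *)
Definition chern_connection (br : V -> V -> V) (J G : 'M[R]_m)
    (nab : V -> V -> V) :=
  [/\ bilinear_map nab,
      (forall x y, nab x (y *m J) = nab x y *m J),
      (forall x y z, ip G (nab x y) z + ip G y (nab x z) = 0) &
      (forall x y, torsion br nab (x *m J) (y *m J) + torsion br nab x y = 0)].

Definition flat (br nab : V -> V -> V) :=
  forall x y z, nab x (nab y z) - nab y (nab x z) - nab (br x y) z = 0.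

(* complexification g_C = V + i V, elements represented as pairs (re, im) *)
Definition iC : C := Complex 0 1.
Definition rC (a : R) : C := Complex a 0.

(* complex-bilinear extension of g *)
Definition gC (G : 'M[R]_m) (X Y : V * V) : C :=
  rC (ip G X.1 Y.1 - ip G X.2 Y.2) + iC * rC (ip G X.1 Y.2 + ip G X.2 Y.1).

(* x - i Jx  (an element of g^{1,0}) and its conjugate x + i Jx *)
Definition e10 (J : 'M[R]_m) (x : V) : V * V := (x, - (x *m J)).
Definition e01 (J : 'M[R]_m) (x : V) : V * V := (x, x *m J).

(* complex-valued 1-forms are given by their (R-linear) values on real
   vectors; complex-linear extension to g_C *)
Definition rlinear (f : V -> C) :=
  forall (a : R) x y, f (a *: x + y) = rC a * f x + f y.
Definition formC (f : V -> C) (X : V * V) : C := f X.1 + iC * f X.2.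

(* wedge product of two complex 1-forms, evaluated on real vectors
   (a complex 2-form on g_C is determined by its values on V x V) *)
Definition wedge (f g : V -> C) (x y : V) : C := f x * g y - f y * g x.

Definition cjf (f : V -> C) : V -> C := fun x => conjc (f x).

End Hermitian.

Definition adjmx (R : rcfType) k (A : 'M[R[i]]_k) : 'M[R[i]]_k :=
  (map_mx (@conjc R) A)^T.

(* Admissible frame: frame e_i = a_i - i J a_i (i : 'I_(k.+1), index 0 is
   e_1, index lift ord0 j is e_{j+2}), dual coframe phi, data lam, v, A
   (A j l = A_{j+2,l+2}, v 0 j = v_{j+2}).  Left-invariant forms satisfy
   d phi (x,y) = - phi([x,y]). *)
Definition admissible_frame (R : rcfType) (k : nat)
    (br : 'rV[R]_((k.+1).*2) -> 'rV[R]_((k.+1).*2) -> 'rV[R]_((k.+1).*2))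
    (J G : 'M[R]_((k.+1).*2))
    (a : 'I_k.+1 -> 'rV[R]_((k.+1).*2))
    (phi : 'I_k.+1 -> 'rV[R]_((k.+1).*2) -> R[i])
    (lam : R) (v : 'rV[R[i]]_k) (A : 'M[R[i]]_k) :=
  (forall i j, gC G (e10 J (a i)) (e01 J (a j)) = (i == j)%:R) /\
  [/\
      (forall i, rlinear (phi i)),
      (forall i j, formC (phi i) (e10 J (a j)) = (i == j)%:R),
      (forall i j, formC (phi i) (e01 J (a j)) = 0),
      (* d phi_1 = - lam phi_1 /\ bar phi_1 *)
      (forall x y, - phi ord0 (br x y)
                   = - rC lam * wedge (phi ord0) (cjf (phi ord0)) x y) &
      (* d phi_i = - bar v_i phi_1 /\ bar phi_1
                   + sum_j bar A_ij (phi_1 + bar phi_1) /\ phi_j *)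
      (forall (i : 'I_k) x y, - phi (lift ord0 i) (br x y)
          = - conjc (v 0 i) * wedge (phi ord0) (cjf (phi ord0)) x y
            + \sum_(j < k) conjc (A i j) *
                wedge (fun z => phi ord0 z + cjf (phi ord0) z)
                      (phi (lift ord0 j)) x y)].

(* Main.v *)
Require Import Defs.
From HB Require Import structures.
From mathcomp Require Import all_boot all_order all_algebra.
From mathcomp Require Import complex ring lra.
Set Implicit Arguments. Unset Strict Implicit. Unset Printing Implicit Defensive.
Import Order.TTheory GRing.Theory Num.Theory.
Local Open Scope ring_scope.
Local Open Scope complex_scope.

Section Bil.
Variables (R : rcfType) (m : nat) (f : 'rV[R]_m -> 'rV[R]_m -> 'rV[R]_m).
Hypothesis Hf : bilinear_map f.
Lemma bl01 z : f 0 z = 0.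
Proof. have := (proj1 Hf) 1 0 0 z. rewrite !scale1r addr0 => H. apply: (@addrI _ (f 0 z)). by rewrite addr0 -H. Qed.
Lemma bl02 z : f z 0 = 0.
Proof. have := (proj2 Hf) 1 0 0 z. rewrite !scale1r addr0 => H. apply: (@addrI _ (f z 0)). by rewrite addr0 -H. Qed.
Lemma blD1 x y z : f (x + y) z = f x z + f y z.
Proof. by rewrite -[x]scale1r (proj1 Hf) !scale1r. Qed.
Lemma blD2 x y z : f z (x + y) = f z x + f z y.
Proof. by rewrite -[x]scale1r (proj2 Hf) !scale1r. Qed.
Lemma blZ1 c x z : f (c *: x) z = c *: f x z.
Proof. by rewrite -[c *: x]addr0 (proj1 Hf) bl01 addr0. Qed.
Lemma blZ2 c x z : f z (c *: x) = c *: f z x.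
Proof. by rewrite -[c *: x]addr0 (proj2 Hf) bl02 addr0. Qed.
Lemma blN1 x z : f (- x) z = - f x z.
Proof. by rewrite -scaleN1r blZ1 scaleN1r. Qed.
Lemma blN2 x z : f z (- x) = - f z x.
Proof. by rewrite -scaleN1r blZ2 scaleN1r. Qed.
End Bil.

Lemma cpl_inj (R : rcfType) (a b c d : R) : a +i* b = c +i* d -> a = c /\ b = d.
Proof. by case. Qed.

Section Proof6.
Variables (R : rcfType) (k : nat).
Local Notation n := k.+1.
Local Notation m := (k.+1).*2.
Local Notation V := 'rV[R]_m.
Local Notation C := R[i].
Variables (br : V -> V -> V) (J G : 'M[R]_m) (a : 'I_n -> V) (phi : 'I_n -> V -> C)
  (lam : R) (v : 'rV[C]_k) (A : 'M[C]_k) (nab : V -> V -> V).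
Hypothesis Hbr : bilinear_map br.
Hypothesis HJJ : J *m J = - 1%:M.
Hypothesis HGs : G^T = G.
Hypothesis HGJ : forall x y, ip G (x *m J) (y *m J) = ip G x y.
Hypothesis Hun : forall i j, gC G (e10 J (a i)) (e01 J (a j)) = (i == j)%:R.
Hypothesis Hlin : forall i, rlinear (phi i).
Hypothesis H10 : forall i j, Defs.formC (phi i) (e10 J (a j)) = (i == j)%:R.
Hypothesis H01 : forall i j, Defs.formC (phi i) (e01 J (a j)) = 0.
Hypothesis Hd0 : forall x y, - phi ord0 (br x y)
                   = - rC lam * wedge (phi ord0) (cjf (phi ord0)) x y.
Hypothesis Hd1 : forall (i : 'I_k) x y, - phi (lift ord0 i) (br x y)
          = - conjc (v 0 i) * wedge (phi ord0) (cjf (phi ord0)) x y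
            + \sum_(j < k) conjc (A i j) *
                wedge (fun z => phi ord0 z + cjf (phi ord0) z)
                      (phi (lift ord0 j)) x y.
Hypothesis Hnb : bilinear_map nab.
Hypothesis HnJ : forall x y, nab x (y *m J) = nab x y *m J.
Hypothesis Hng : forall x y z, ip G (nab x y) z + ip G y (nab x z) = 0.
Hypothesis Hnt : forall x y, torsion br nab (x *m J) (y *m J) + torsion br nab x y = 0.

Local Notation iC := (iC R).

Lemma rCE (c : R) : rC c = c%:C. Proof. by []. Qed.

Lemma phiL i c x y : phi i (c *: x + y) = rC c * phi i x + phi i y.
Proof. exact: Hlin. Qed.
Lemma rCN1 : rC (-1) = -1 :> C.
Proof. by rewrite /rC -[-1 : C]/(- (1 +i* 0)); simpc. Qed.
Lemma natC (b : bool) : (b%:R : C) = rC (b%:R). Proof. by case: b. Qed.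
Lemma rC1 : rC 1 = 1 :> C. Proof. by []. Qed.

Lemma phi0 i : phi i 0 = 0.
Proof.
have := Hlin i 1 0 0. rewrite scale1r addr0 rC1 mul1r => H.
apply: (@addrI _ (phi i 0)). by rewrite addr0 -H.
Qed.
Lemma phiD i x y : phi i (x + y) = phi i x + phi i y.
Proof. by rewrite -{1}[x]scale1r phiL rC1 mul1r. Qed.
Lemma phiZ i c x : phi i (c *: x) = rC c * phi i x.
Proof. by rewrite -[c *: x]addr0 phiL phi0 addr0. Qed.
Lemma phiN i x : phi i (- x) = - phi i x.
Proof. by rewrite -scaleN1r phiZ rCN1 mulN1r. Qed.
Lemma phiB i x y : phi i (x - y) = phi i x - phi i y.
Proof. by rewrite phiD phiN. Qed.
Lemma phi_sum i (I : finType) (F : I -> V) : phi i (\sum_(j : I) F j) = \sum_(j : I) phi i (F j).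
Proof. exact: (big_morph (phi i) (phiD i) (phi0 i)). Qed.

Lemma solve_pq (p q : C) (d : R) : p - iC * q = rC d -> p + iC * q = 0 ->
  p = rC (d / 2) /\ q = iC * rC (d / 2).
Proof.
case: p => p1 p2; case: q => q1 q2; rewrite /Defs.iC /rC; simpc.
move=> /cpl_inj [h1 h2] /cpl_inj [h3 h4]; split; congr (_ +i* _); lra.
Qed.

Lemma phi_ab i j : phi i (a j) = rC ((i == j)%:R / 2) /\
   phi i (a j *m J) = iC * rC ((i == j)%:R / 2).
Proof.
apply: solve_pq.
  have := H10 i j; rewrite /Defs.formC /e10 /= phiN mulrN => ->.
  by case: (i == j).
by have := H01 i j; rewrite /Defs.formC /e01 /=.
Qed.
Lemma phi_a i j : phi i (a j) = rC ((i == j)%:R / 2). Proof. by case: (phi_ab i j). Qed.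
Lemma phi_aJ i j : phi i (a j *m J) = iC * rC ((i == j)%:R / 2). Proof. by case: (phi_ab i j). Qed.


Lemma phi_comb i (c d : 'I_n -> R) :
  phi i (\sum_j (c j *: a j + d j *: (a j *m J))) = rC (c i / 2) + iC * rC (d i / 2).
Proof.
rewrite phi_sum (bigD1 i) //= big1 => [|j /negbTE ji]; last first.
  rewrite phiD !phiZ phi_a phi_aJ eq_sym ji /rC /Defs.iC -[0 : C]/(0 +i* 0); simpc.
  by congr (_ +i* _); ring.
rewrite phiD !phiZ phi_a phi_aJ eqxx addr0 /rC /Defs.iC; simpc.
by congr (_ +i* _); ring.
Qed.

Lemma span_ab x : exists c d : 'I_n -> R, x = \sum_j (c j *: a j + d j *: (a j *m J)).
Proof.
pose B := col_mx (\matrix_(j < n) a j) (\matrix_(j < n) (a j *m J)).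
have Bexp (u : 'rV_(n + n)) :
    u *m B = \sum_j (lsubmx u 0 j *: a j + rsubmx u 0 j *: (a j *m J)).
  rewrite -{1}[u]hsubmxK mul_row_col !mulmx_sum_row big_split /=.
  by congr (_ + _); apply: eq_bigr => j _; rewrite rowK.
have Bfree : row_free B.
  apply: inj_row_free => u Hu.
  have H0 : forall j, lsubmx u 0 j = 0 /\ rsubmx u 0 j = 0.
    move=> j; move: (congr1 (phi j) Hu); rewrite Bexp phi_comb phi0 /rC /Defs.iC.
    rewrite -[0 : C]/(0 +i* 0); simpc => /cpl_inj [h1 h2]; split; lra.
  rewrite -[u]hsubmxK.
  have -> : lsubmx u = 0 by apply/rowP => j; rewrite [RHS]mxE; exact: (H0 j).1.
  have -> : rsubmx u = 0 by apply/rowP => j; rewrite [RHS]mxE; exact: (H0 j).2.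
  by rewrite row_mx0.
have Bfull : row_full B by rewrite /row_full; move/eqP: Bfree => ->; rewrite addnn.
have /submxP [D ->] : (x <= B)%MS by apply: submx_full.
by exists (fun j => lsubmx D 0 j), (fun j => rsubmx D 0 j); rewrite Bexp.
Qed.

Lemma expand x :
  x = \sum_j ((2 * complex.Re (phi j x) : R) *: a j + (2 * complex.Im (phi j x) : R) *: (a j *m J)).
Proof.
have [c [d Hx]] := span_ab x.
have Hc j : 2 * complex.Re (phi j x) = c j /\ 2 * complex.Im (phi j x) = d j.
  by rewrite Hx phi_comb /rC /Defs.iC; simpc => /=; split; field.
rewrite {1}Hx; apply: eq_bigr => j _; by rewrite (proj1 (Hc j)) (proj2 (Hc j)).
Qed.

Lemma phi_inj x y : (forall j, phi j x = phi j y) -> x = y.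
Proof. by move=> H; rewrite (expand x) (expand y); apply: eq_bigr => j _; rewrite H. Qed.

Lemma phiJ i x : phi i (x *m J) = iC * phi i x.
Proof.
rewrite {1}(expand x) mulmx_suml.
have -> : \sum_j ((2 * complex.Re (phi j x) : R) *: a j + (2 * complex.Im (phi j x) : R) *: (a j *m J)) *m J
   = \sum_j ((- (2 * complex.Im (phi j x)) : R) *: a j + (2 * complex.Re (phi j x) : R) *: (a j *m J)).
  apply: eq_bigr => j _; rewrite mulmxDl -!scalemxAl -mulmxA HJJ mulmxN mulmx1.
  by rewrite scalerN scaleNr addrC.
rewrite phi_comb; move: (phi i x) => z; case: z => p q; rewrite /rC /Defs.iC /=; simpc.
by congr (_ +i* _); by field.
Qed.


Lemma ipDl x y z : ip G (x + y) z = ip G x z + ip G y z.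
Proof. by rewrite /ip !mulmxDl mxE. Qed.
Lemma ipZl c x z : ip G (c *: x) z = c * ip G x z.
Proof. by rewrite /ip -!scalemxAl mxE. Qed.
Lemma ipNl x z : ip G (- x) z = - ip G x z.
Proof. by rewrite -scaleN1r ipZl mulN1r. Qed.
Lemma ip0l z : ip G 0 z = 0.
Proof. by rewrite /ip !mul0mx mxE. Qed.
Lemma ip_sym x y : ip G x y = ip G y x.
Proof.
rewrite /ip; transitivity ((x *m G *m y^T)^T 0 0); first by rewrite [RHS]mxE.
by rewrite !trmx_mul trmxK HGs mulmxA.
Qed.
Lemma ip_suml (I : finType) (F : I -> V) z : ip G (\sum_(j : I) F j) z = \sum_(j : I) ip G (F j) z.
Proof. exact: (big_morph (fun w => ip G w z) (fun x y => ipDl x y z) (ip0l z)). Qed.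

Lemma ip_ab i j : ip G (a i) (a j) = (i == j)%:R / 2 /\ ip G (a i) (a j *m J) = 0.
Proof.
have := Hun i j; rewrite /gC /e10 /e01 /= !ipNl opprK.
have -> : ip G (a i *m J) (a j) = - ip G (a i) (a j *m J).
  by rewrite -HGJ -mulmxA HJJ mulmxN mulmx1 ipNl.
rewrite HGJ natC /rC /Defs.iC; simpc.
move=> /cpl_inj [h1 h2]; split; lra.
Qed.
Lemma ip_aa i j : ip G (a i) (a j) = (i == j)%:R / 2. Proof. by case: (ip_ab i j). Qed.
Lemma ip_aaJ i j : ip G (a i) (a j *m J) = 0. Proof. by case: (ip_ab i j). Qed.
Lemma ip_aJa i j : ip G (a i *m J) (a j) = 0. Proof. by rewrite ip_sym ip_aaJ. Qed.
Lemma ip_aJaJ i j : ip G (a i *m J) (a j *m J) = (i == j)%:R / 2. Proof. by rewrite HGJ ip_aa. Qed.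

Lemma ip_wa w l : ip G w (a l) = complex.Re (phi l w).
Proof.
rewrite {1}(expand w) ip_suml (bigD1 l) //= big1 => [|j /negbTE jl];
  rewrite ipDl !ipZl ip_aa ip_aJa ?eqxx ?jl /= ?addr0; by field.
Qed.
Lemma ip_waJ w l : ip G w (a l *m J) = complex.Im (phi l w).
Proof.
rewrite {1}(expand w) ip_suml (bigD1 l) //= big1 => [|j /negbTE jl];
  rewrite ipDl !ipZl ip_aJaJ ip_aaJ ?eqxx ?jl /= ?addr0; by field.
Qed.


Lemma skew x l j : phi l (nab x (a j)) = - conjc (phi j (nab x (a l))).
Proof.
have E1 := Hng x (a j) (a l).
have E2 := Hng x (a j *m J) (a l).
rewrite ip_wa [ip G (a j) _]ip_sym ip_wa in E1.
rewrite HnJ ip_wa phiJ [ip G (a j *m J) _]ip_sym ip_waJ in E2.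
move: E1 E2; move: (phi l (nab x (a j))) (phi j (nab x (a l))) => z w.
case: z => z1 z2; case: w => w1 w2; rewrite /Defs.iC /=; simpc => /= E1 E2.
congr (_ +i* _); lra.
Qed.

Lemma JJ (w : V) : w *m J *m J = - w.
Proof. by rewrite -mulmxA HJJ mulmxN mulmx1. Qed.

Lemma S2 x y i : 2 * (phi i (nab x y) + iC * phi i (nab (x *m J) y)) =
  phi i (br x y + br (x *m J) (y *m J)) - iC * phi i (br x (y *m J) - br (x *m J) y).
Proof.
have E1 := congr1 (phi i) (Hnt x y).
have E2 := congr1 (phi i) (Hnt x (y *m J)).
rewrite /torsion in E1 E2.
rewrite JJ (blN2 Hnb) (blN1 Hnb) (blN2 Hbr) !HnJ in E2.
rewrite !HnJ in E1.
rewrite !(phiD, phiB, phiN, phiJ, phi0) in E1 E2.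
rewrite !(phiD, phiB, phiN).
move: E1 E2.
move: (phi i (nab x y)) (phi i (nab (x *m J) y)) (phi i (nab y x)) (phi i (nab (y *m J) x))
  (phi i (br x y)) (phi i (br (x *m J) (y *m J))) (phi i (br x (y *m J))) (phi i (br (x *m J) y))
  => [p1 p2] [q1 q2] [r1 r2] [s1 s2] [t1 t2] [u1 u2] [w1 w2] [z1 z2].
rewrite /Defs.iC -[0 : C]/(0 +i* 0); simpc.
move=> /cpl_inj [h1 h2] /cpl_inj [h3 h4].
simpc; congr (_ +i* _); lra.
Qed.


Definition w0 x y := phi ord0 x * conjc (phi ord0 y) - phi ord0 y * conjc (phi ord0 x).
Definition sig (j : 'I_k) (y : V) : C := \sum_(l < k) conjc (A j l) * phi (lift ord0 l) y.

Lemma b0 x y : phi ord0 (br x y) = rC lam * w0 x y.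
Proof. by apply: oppr_inj; rewrite Hd0 mulNr. Qed.

Lemma bj j x y : phi (lift ord0 j) (br x y) = conjc (v 0 j) * w0 x y -
  ((phi ord0 x + conjc (phi ord0 x)) * sig j y - (phi ord0 y + conjc (phi ord0 y)) * sig j x).
Proof.
apply: oppr_inj; rewrite Hd1 /wedge /cjf /= opprB [RHS]addrC mulNr; congr (_ + _).
rewrite /sig !mulr_sumr -sumrB; apply: eq_bigr => l _; ring.
Qed.

Lemma sigJ j y : sig j (y *m J) = iC * sig j y.
Proof. by rewrite /sig mulr_sumr; apply: eq_bigr => l _; rewrite phiJ; ring. Qed.

Definition Nf (kk : 'I_n) (y : V) : C :=
  match unlift ord0 kk with
  | None => -2 * rC lam * phi ord0 y
  | Some j => -2 * (conjc (v 0 j) * phi ord0 y + sig j y)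
  end.

Lemma brk x y kk : phi kk (br x y + br (x *m J) (y *m J)) - iC * phi kk (br x (y *m J) - br (x *m J) y)
  = 2 * conjc (phi ord0 x) * Nf kk y.
Proof.
rewrite !(phiD, phiB, phiN); case: (unliftP ord0 kk) => [j ->|->]; rewrite /Nf.
  rewrite liftK !bj /w0 !phiJ !sigJ.
  move: (phi ord0 x) (phi ord0 y) (sig j x) (sig j y) (conjc (v 0 j))
    => [p1 p2] [q1 q2] [r1 r2] [s1 s2] [t1 t2].
  rewrite /Defs.iC; simpc; congr (_ +i* _); ring.
rewrite unlift_none !b0 /w0 !phiJ.
move: (phi ord0 x) (phi ord0 y) => [p1 p2] [q1 q2].
rewrite /Defs.iC /rC; simpc; congr (_ +i* _); ring.
Qed.

Lemma two_neq0 : (2 : C) != 0.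
Proof. by rewrite pnatr_eq0. Qed.

Lemma SN x y kk : phi kk (nab x y) + iC * phi kk (nab (x *m J) y) = conjc (phi ord0 x) * Nf kk y.
Proof. by apply: (mulfI two_neq0); rewrite S2 brk mulrA. Qed.


Definition Nm (kk l : 'I_n) : C := Nf kk (a l).
Definition Mm (kk l : 'I_n) : C := - conjc (Nm l kk).
Definition Gm x (kk l : 'I_n) : C := conjc (phi ord0 x) * Nm kk l + phi ord0 x * Mm kk l.

Lemma Gam x kk l : 2 * phi kk (nab x (a l)) = Gm x kk l.
Proof.
have S1 := SN x (a l) kk.
have S3 := SN x (a kk) l.
rewrite (skew x l kk) (skew (x *m J) l kk) in S3.
rewrite /Gm /Mm /Nm.
move: S1 S3.
move: (phi kk (nab x (a l))) (phi kk (nab (x *m J) (a l))) (phi ord0 x) (Nf kk (a l)) (Nf l (a kk))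
  => [p1 p2] [q1 q2] [r1 r2] [s1 s2] [t1 t2].
rewrite /Defs.iC; simpc => /cpl_inj [h1 h2] /cpl_inj [h3 h4].
congr (_ +i* _); lra.
Qed.

Lemma nab_sum x (F : 'I_n -> V) : nab x (\sum_j F j) = \sum_j nab x (F j).
Proof. exact: (big_morph (nab x) (fun u w => blD2 Hnb u w x) (bl02 Hnb x)). Qed.

Lemma nabE x y kk : phi kk (nab x y) = \sum_l Gm x kk l * phi l y.
Proof.
rewrite {1}(expand y) nab_sum phi_sum; apply: eq_bigr => l _.
rewrite (blD2 Hnb) !(blZ2 Hnb) HnJ phiD !phiZ phiJ -Gam.
move: (phi kk (nab x (a l))) (phi l y) => [p1 p2] [z1 z2] /=.
rewrite /Defs.iC /rC; simpc; congr (_ +i* _); ring.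
Qed.


Definition Kf (kk r : 'I_n) : C :=
  \sum_l (Mm kk l * Nm l r - Nm kk l * Mm l r) - rC lam * (Mm kk r - Nm kk r).

Lemma nabE2 x y z kk :
  phi kk (nab x (nab y z)) = \sum_r \sum_l Gm x kk l * (Gm y l r * phi r z).
Proof.
rewrite nabE exchange_big /=.
rewrite (eq_bigr (fun l => \sum_r Gm x kk l * (Gm y l r * phi r z))) //.
by move=> l _; rewrite nabE mulr_sumr.
Qed.

Lemma sum_comb (F H K : 'I_n -> C) (c d : C) :
  (forall l, F l - H l = K l) -> c = d ->
  \sum_l F l - \sum_l H l - c = \sum_l K l - d.
Proof. by move=> E ->; rewrite -sumrB; congr (_ - _); apply: eq_bigr. Qed.

Lemma conjM (p q : C) : conjc (p * q) = conjc p * conjc q.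
Proof. by case: p => p1 p2; case: q => q1 q2; simpc; congr (_ +i* _); ring. Qed.
Lemma conj_rC (c : R) : conjc (rC c) = rC c.
Proof. by rewrite /rC; simpc. Qed.
Lemma conj_w0 x y : conjc (w0 x y) = - w0 x y.
Proof.
rewrite /w0; move: (phi ord0 x) (phi ord0 y) => [p1 p2] [q1 q2].
by simpc; congr (_ +i* _); ring.
Qed.

Lemma curvE x y z kk :
  phi kk (nab x (nab y z) - nab y (nab x z) - nab (br x y) z)
  = w0 x y * \sum_r Kf kk r * phi r z.
Proof.
rewrite !phiB !nabE2 nabE -!sumrB mulr_sumr; apply: eq_bigr => r _.
rewrite /Kf [(_ - _) * phi r z]mulrBl mulr_suml [w0 x y * _]mulrBr mulr_sumr.
apply: sum_comb => [l|]; first by rewrite /Gm /w0; ring.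
by rewrite /Gm b0 conjM conj_rC conj_w0; ring.
Qed.


Lemma rC0 : rC 0 = 0 :> C. Proof. by []. Qed.
Lemma conjNc (z : C) : conjc (- conjc z) = - z.
Proof. by case: z => p q; simpc. Qed.

Lemma Nm00 : Nm ord0 ord0 = - rC lam.
Proof.
rewrite /Nm /Nf unlift_none phi_a eqxx /= /rC; simpc; congr (_ +i* _); by field.
Qed.

Lemma Nm0l l : Nm ord0 (lift ord0 l) = 0.
Proof.
rewrite /Nm /Nf unlift_none phi_a (negbTE (neq_lift ord0 l)) /= mul0r rC0; exact: mulr0.
Qed.

Lemma sig_a0 j : sig j (a ord0) = 0.
Proof.
rewrite /sig big1 // => l _.
by rewrite phi_a eq_sym (negbTE (neq_lift ord0 l)) /= mul0r rC0 mulr0.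
Qed.

Lemma sig_al j l : sig j (a (lift ord0 l)) = conjc (A j l) * rC (1 / 2).
Proof.
rewrite /sig (bigD1 l) //= big1 => [|l' /negbTE ne].
  by rewrite phi_a eqxx addr0.
by rewrite phi_a (inj_eq (@lift_inj _ ord0)) ne /= mul0r rC0 mulr0.
Qed.

Lemma Nmj0 j : Nm (lift ord0 j) ord0 = - conjc (v 0 j).
Proof.
rewrite /Nm /Nf liftK phi_a eqxx sig_a0 addr0 /=.
move: (conjc (v 0 j)) => [p q]; rewrite /rC; simpc; congr (_ +i* _); by field.
Qed.

Lemma Nmjl j l : Nm (lift ord0 j) (lift ord0 l) = - conjc (A j l).
Proof.
rewrite /Nm /Nf liftK phi_a (negbTE (neq_lift ord0 l)) sig_al /= mul0r rC0 mulr0 add0r.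
move: (conjc (A j l)) => [p q]; rewrite /rC; simpc; congr (_ +i* _); by field.
Qed.

Lemma Kf00 : Kf ord0 ord0 = - (\sum_j v 0 j * conjc (v 0 j) + rC (2 * lam ^+ 2)).
Proof.
rewrite /Kf big_ord_recl.
rewrite (eq_bigr (fun j => - (v 0 j * conjc (v 0 j)))) => [|j _]; last first.
  by rewrite /Mm Nmj0 Nm0l conjNc conjc0; ring.
rewrite sumrN /Mm Nm00.
move: (\sum_(i < k) v 0 i * conjc (v 0 i)) => S.
case: S => s1 s2; rewrite /rC; simpc; congr (_ +i* _); ring.
Qed.

Lemma KfJL j l : Kf (lift ord0 j) (lift ord0 l) = conjc (v 0 j) * v 0 l
   + \sum_r (conjc (A j r) * A l r - A r j * conjc (A r l)) - rC lam * (A l j + conjc (A j l)).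
Proof.
rewrite /Kf big_ord_recl.
rewrite (eq_bigr (fun r => conjc (A j r) * A l r - A r j * conjc (A r l))) => [|r _]; last first.
  rewrite /Mm /bump /= !Nmjl !conjNc; ring.
rewrite /Mm !Nmjl !Nmj0 !Nm0l !conjNc; ring.
Qed.


Lemma normal_sum j l :
  (A *m adjmx A) l j - (adjmx A *m A) l j
  = \sum_r (conjc (A j r) * A l r - A r j * conjc (A r l)).
Proof. by rewrite !mxE -sumrB; apply: eq_bigr => r _; rewrite /adjmx !mxE; ring. Qed.

Lemma Kf_zero : lam = 0 -> v = 0 -> A *m adjmx A = adjmx A *m A -> forall kk r, Kf kk r = 0.
Proof.
move=> hl hv hA.
have v0 j : v 0 j = 0 by rewrite hv mxE.
have Nc kk : Nm kk ord0 = 0.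
  case: (unliftP ord0 kk) => [j ->|->].
    by rewrite Nmj0 v0 conjc0 oppr0.
  by rewrite Nm00 hl rC0 oppr0.
have Nr r : Nm ord0 r = 0.
  case: (unliftP ord0 r) => [j ->|->]; first exact: Nm0l.
  by rewrite Nm00 hl rC0 oppr0.
move=> kk r.
case: (unliftP ord0 kk) => [j ->|->]; last first.
  rewrite /Kf /Mm big1 => [|l _]; last by rewrite Nc Nr conjc0 oppr0 !mul0r subrr.
  by rewrite hl rC0 mul0r subr0.
case: (unliftP ord0 r) => [l ->|->]; last first.
  rewrite /Kf /Mm big1 => [|l _]; last by rewrite Nc Nr conjc0 oppr0 !mulr0 subrr.
  by rewrite hl rC0 mul0r subr0.
by rewrite KfJL v0 conjc0 mul0r add0r hl rC0 mul0r subr0 -normal_sum hA subrr.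
Qed.

Theorem mainS : flat br nab <-> [/\ lam = 0, v = 0 & A *m adjmx A = adjmx A *m A].
Proof.
split=> [Hf|[hl hv hA] x y z]; last first.
  apply: phi_inj => kk; rewrite curvE phi0 big1 ?mulr0 // => r _.
  by rewrite Kf_zero // mul0r.
have K0 kk r : Kf kk r = 0.
  have := congr1 (phi kk) (Hf (a ord0) (a ord0 *m J) (a r)).
  rewrite curvE phi0 (bigD1 r) //= big1 => [|r' /negbTE ne]; last first.
    by rewrite phi_a ne /= mul0r rC0 mulr0.
  rewrite phi_a eqxx addr0 /w0 !phi_a !phi_aJ eqxx /=.
  move: (Kf kk r) => [p q]; rewrite /rC /Defs.iC -[0 : C]/(0 +i* 0); simpc.
  by move=> /cpl_inj [h1 h2]; congr (_ +i* _); lra.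
have Hs : 0 <= \sum_j v 0 j * conjc (v 0 j) by apply: sumr_ge0 => j _; exact: mulcJ_ge0.
have HL : 0 <= rC (2 * lam ^+ 2) by rewrite rCE ler0c mulr_ge0 // sqr_ge0.
have := K0 ord0 ord0; rewrite Kf00 => /eqP; rewrite oppr_eq0 (paddr_eq0 Hs HL).
move=> /andP [/eqP hs /eqP hL].
have hl : lam = 0.
  move: hL; rewrite /rC -[0 : C]/(0 +i* 0) => /cpl_inj [h _].
  have : lam ^+ 2 = 0 by lra.
  by move/eqP; rewrite sqrf_eq0 => /eqP.
have hv : v = 0.
  apply/rowP => j; rewrite [RHS]mxE.
  have := @psumr_eq0P _ _ xpredT (fun j => v 0 j * conjc (v 0 j)) (fun j _ => mulcJ_ge0 (v 0 j)) hs j isT.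
  by move/eqP; rewrite mulf_eq0 conjc_eq0 orbb => /eqP.
split => //; apply/matrixP => l j; apply/eqP; rewrite -subr_eq0 normal_sum.
have := K0 (lift ord0 j) (lift ord0 l); rewrite KfJL hv hl !mxE conjc0 mul0r add0r rC0 mul0r subr0.
by move=> ->.
Qed.

End Proof6.

Theorem lemma6 (R : rcfType) (k : nat)
    (br : 'rV[R]_((k.+1).*2) -> 'rV[R]_((k.+1).*2) -> 'rV[R]_((k.+1).*2))
    (J G : 'M[R]_((k.+1).*2))
    (a : 'I_k.+1 -> 'rV[R]_((k.+1).*2))
    (phi : 'I_k.+1 -> 'rV[R]_((k.+1).*2) -> R[i])
    (lam : R) (v : 'rV[R[i]]_k) (A : 'M[R[i]]_k)
    (nab : 'rV[R]_((k.+1).*2) -> 'rV[R]_((k.+1).*2) -> 'rV[R]_((k.+1).*2)) :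
  is_lie_bracket br ->
  almost_abelian br ->
  hermitian_structure br J G ->
  admissible_frame br J G a phi lam v A ->
  chern_connection br J G nab ->
  (flat br nab <-> [/\ lam = 0, v = 0 & A *m adjmx A = adjmx A *m A]).

Proof.
move=> [Hbr _] _ [HJJ _ HGs _ HGJ] [Hun [Hlin H10 H01 Hd0 Hd1]] [Hnb HnJ Hng Hnt].
exact: (mainS Hbr HJJ HGs HGJ Hun Hlin H10 H01 Hd0 Hd1 Hnb HnJ Hng Hnt).
Qed.
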